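(* Let $A(z)=\sum_{k=0}^{\infty}a_kz^k$ with $a_0\neq 0$ and $H(z)=\sum_{k=1}^{\infty}h_kz^k$ with $h_1\neq 0$ be analytic in a disk $|z|<R$ with $R>1$, with real coefficients. Let the Sheffer polynomials $p_k$ be defined by $A(t)e^{xH(t)}=\sum_{k=0}^{\infty}p_k(x)t^k$ for $|t|<R$, and assume $p_k(x)\ge 0$ for all $x\ge 0$ and all $k$, $A(1)\neq 0$ and $H'(1)=1$. Let $(b_n)$ be a positive increasing sequence with $b_n\to\infty$ and $b_n/n\to 0$, and define $$T_n^*(f;x)=\frac{e^{-\frac{n}{b_n}xH(1)}}{A(1)}\sum_{k=0}^{\infty}p_k\Big(\frac{n}{b_n}x\Big)f\Big(\frac{k}{n}b_n\Big).$$ Let $a>0$. If $f\in C_E[0,\infty)$, then for every $x\in[0,a]$, $$|T_n^*(f;x)-f(x)|\le\Bigg\{1+\sqrt{\big(1+H''(1)\big)a+\frac{b_n}{n}\frac{A'(1)+A''(1)}{A(1)}}\Bigg\}\,\omega\Big(f,\sqrt{\tfrac{b_n}{n}}\Big).$$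
   Context: $C_E[0,\infty)$ denotes the set of continuous functions $f$ on $[0,\infty)$ such that $|f(x)|\le \beta e^{\alpha x}$ for all $x\ge 0$, for some finite positive constants $\alpha,\beta$. For $\delta>0$, $\omega(f,\delta)=\sup\{|f(x)-f(y)|: x,y\in[0,\infty),\ |x-y|\le\delta\}$ is the modulus of continuity of $f$. *)

(* Defs.v *)
From HB Require Import structures.
From mathcomp Require Import all_boot all_order all_algebra.
From mathcomp Require Import all_classical all_reals all_analysis.
Set Implicit Arguments. Unset Strict Implicit. Unset Printing Implicit Defensive.
Import Order.TTheory GRing.Theory Num.Theory.
Import numFieldNormedType.Exports.
Local Open Scope classical_set_scope.
Local Open Scope ring_scope.

Definition psval {R : realType} (c : nat -> R) (z : R) : R :=
  limn (series (fun k => c k * z ^+ k)).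

Definition C_E {R : realType} (f : R -> R) : Prop :=
  {within `[0, +oo[, continuous f} /\
  exists alpha beta : R, 0 < alpha /\ 0 < beta /\
    forall x : R, 0 <= x -> `|f x| <= beta * expR (alpha * x).

(* modulus of continuity on [0,oo), valued in the extended reals
   (it may be +oo for f in C_E[0,oo)) *)
Definition modcont {R : realType} (f : R -> R) (d : R) : \bar R :=
  ereal_sup [set e : \bar R | exists x y : R,
     [/\ 0 <= x, 0 <= y, `|x - y| <= d & e = (`|f x - f y|)%:E]].

Definition Tstar {R : realType} (a h : nat -> R) (p : nat -> {poly R})
  (b : nat -> R) (n : nat) (f : R -> R) (x : R) : R :=
  expR (- (n%:R / b n * x * psval h 1)) / psval a 1 *
  limn (series (fun k => (p k).[n%:R / b n * x] * f (k%:R / n%:R * b n))).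

(* Main.v *)
Require Import Defs.
From HB Require Import structures.
From mathcomp Require Import all_boot all_order all_algebra.
From mathcomp Require Import all_classical all_reals all_analysis.
From mathcomp Require Import ring lra.
Set Implicit Arguments. Unset Strict Implicit. Unset Printing Implicit Defensive.
Import Order.TTheory GRing.Theory Num.Theory.
Import numFieldNormedType.Exports.
Local Open Scope classical_set_scope.
Local Open Scope ring_scope.

Section S.
Variable R : realType.

Lemma bern_aux (t e : R) k : 0 <= t -> 0 <= e ->
  k.+1%:R * t ^+ k * e <= (t + e) ^+ k.+1.
Proof.
move=> t0 e0; elim: k => [|k IH]; first by rewrite expr0 expr1 !mul1r lerDr.
have h1 : t ^+ k.+1 <= (t + e) ^+ k.+1 by rewrite lerXn2r ?nnegrE ?addr_ge0 ?lerDl.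
have h2 : t * (k.+1%:R * t ^+ k * e) <= t * (t + e) ^+ k.+1 by rewrite ler_wpM2l.
have h3 : e * t ^+ k.+1 <= e * (t + e) ^+ k.+1 by rewrite ler_wpM2l.
have -> : (t + e) ^+ k.+2 = t * (t + e) ^+ k.+1 + e * (t + e) ^+ k.+1 by rewrite exprS; ring.
have -> : k.+2%:R * t ^+ k.+1 * e = t * (k.+1%:R * t ^+ k * e) + e * t ^+ k.+1.
  by rewrite -(natr1 k.+1) exprS; ring.
exact: lerD.
Qed.

Lemma cvg_series_shift (u : R ^nat) : cvgn (series u) -> cvgn (series (fun k => u k.+1)).
Proof.
move=> cu.
have -> : series (fun k => u k.+1) = fun n => series u n.+1 - u 0%N.
  apply/funext => n; rewrite /series /= big_nat_recl //= addrC addKr //.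

have h1 : cvgn (fun n => series u n.+1).
  move/cvg_ex: cu => [l hl]; apply/cvg_ex; exists l; move: hl; by rewrite -cvg_shiftS.
apply: is_cvgB => //; exact: is_cvg_cst.
Qed.


Lemma cvg_diffs (c : R ^nat) (Rad : R) :
  (forall z, `|z| < Rad -> cvgn (pseries c z)) ->
  forall z, `|z| < Rad -> cvgn (pseries (pseries_diffs c) z).
Proof.
move=> hc z hz.
pose t := `|z|.
have t0 : 0 <= t := normr_ge0 z.
pose e := (Rad - t) / 3.
have e0 : 0 < e by rewrite /e divr_gt0 // subr_gt0.
have hs : cvgn (pseries (fun i => `|c i|) (t + e)).
  apply: (@is_cvg_pseries_inside_norm _ _ (t + e + e)).
    apply: hc; rewrite ger0_norm; last by rewrite !addr_ge0 // ltW.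
    rewrite /e /t; lra.
  rewrite !ger0_norm; [|by rewrite !addr_ge0 // ltW|by rewrite !addr_ge0 // ltW].
  by rewrite ltrDl.
have hsh := cvg_series_shift hs.
apply: normed_cvg.
apply: (@series_le_cvg _ _ (fun k => e^-1 * (`|c k.+1| * (t + e) ^+ k.+1))).
- by move=> n; apply: normr_ge0.
- move=> n /=; apply: mulr_ge0; [by rewrite invr_ge0 ltW | apply: mulr_ge0 => //; apply: exprn_ge0; apply: addr_ge0 => //; exact: ltW].
- move=> n /=; rewrite /pseries_diffs !normrM normrX -/t normr_nat.
  have hb := bern_aux n t0 (ltW e0).
  have hb2 : `|c n.+1| * (n.+1%:R * t ^+ n * e) <= `|c n.+1| * (t + e) ^+ n.+1.
    by rewrite ler_wpM2l.
  have -> : n.+1%:R * `|c n.+1| * t ^+ n = e^-1 * (`|c n.+1| * (n.+1%:R * t ^+ n * e)).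
    by field; rewrite gt_eqF.
  by rewrite ler_wpM2l // invr_ge0 ltW.
- have -> : (fun k => e^-1 * (`|c k.+1| * (t + e) ^+ k.+1)) =
     e^-1 *: (fun k => `|c k.+1| * (t + e) ^+ k.+1) by apply/funext.
  exact: is_cvg_seriesZ.
Qed.


Lemma psval_is_derive (c : R ^nat) (Rad : R) :
  (forall z, `|z| < Rad -> cvgn (pseries c z)) ->
  forall x : R, `|x| < Rad -> is_derive x 1 (psval c) (psval (pseries_diffs c) x).
Proof.
move=> hc x hx.
have hd := cvg_diffs hc.
have hdd := cvg_diffs hd.
pose K := (`|x| + Rad) / 2.
have hK : `|K| < Rad.
  rewrite [`|K|]ger0_norm /K; first lra.
  by rewrite divr_ge0 // addr_ge0 // (le_trans _ (ltW hx)).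
have hxK : `|x| < `|K|.
  rewrite [`|K|]ger0_norm /K; first lra.
  by rewrite divr_ge0 // addr_ge0 // (le_trans _ (ltW hx)).
exact: (pseries_snd_diffs (hc _ hK) (hd _ hK) (hdd _ hK) hxK).
Qed.

Lemma near1_lt (Rad : R) : 1 < Rad -> \forall y \near (1:R), `|y| < Rad.
Proof.
move=> hR.
apply/nbhs_ballP; exists (Rad - 1); first by rewrite /= subr_gt0.
move=> y /=; rewrite /ball /= => hy.
have := ler_normD 1 (y - 1); rewrite normr1 addrC subrK.
rewrite distrC in hy; lra.
Qed.

Lemma near_lt (Rad t : R) : `|t| < Rad -> \forall y \near t, `|y| < Rad.
Proof.
move=> hR.
apply/nbhs_ballP; exists (Rad - `|t|); first by rewrite /= subr_gt0.
move=> y /=; rewrite /ball /= => hy.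
have := ler_normD t (y - t); rewrite addrC subrK.
rewrite distrC in hy; lra.
Qed.

Lemma psval_derive1 (c : R ^nat) (Rad : R) :
  (forall z, `|z| < Rad -> cvgn (pseries c z)) ->
  forall x : R, `|x| < Rad -> derive1 (psval c) x = psval (pseries_diffs c) x.
Proof.
move=> hc x hx; rewrite derive1E.
by have [_ ->] := psval_is_derive hc hx.
Qed.

Lemma psval_derive2 (c : R ^nat) (Rad : R) : 1 < Rad ->
  (forall z, `|z| < Rad -> cvgn (pseries c z)) ->
  derive1n 2 (psval c) 1 = psval (pseries_diffs (pseries_diffs c)) 1.
Proof.
move=> hR hc.
have hd := cvg_diffs hc.
have h1 : `|1:R| < Rad by rewrite normr1.
rewrite /derive1n /= derive1E.
have -> : 'D_1 (derive1 (psval c)) 1 = 'D_1 (psval (pseries_diffs c)) 1.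
  apply: near_eq_derive.
  by near=> y; apply: (psval_derive1 hc); near: y; exact: near1_lt.
by have [_ ->] := psval_is_derive hd h1.
Unshelve. all: by end_near.
Qed.


Lemma is_derive_mul (f g : R -> R) (x df dg : R) :
  is_derive x 1 f df -> is_derive x 1 g dg ->
  is_derive x 1 (fun t => f t * g t) (f x * dg + g x * df).
Proof. by move=> hf hg; have := is_deriveM hf hg. Qed.

Lemma is_derive_expc (g : R -> R) (x dg : R) :
  is_derive x 1 g dg -> is_derive x 1 (fun t => expR (g t)) (expR (g x) * dg).
Proof. by move=> hg; have := @is_derive1_comp R expR g x _ _ (is_derive_expR (g x)) hg. Qed.

Lemma is_derive_scal (g : R -> R) (k x dg : R) :
  is_derive x 1 g dg -> is_derive x 1 (fun t => k * g t) (k * dg).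
Proof. by move=> hg; have := is_deriveZ k hg. Qed.

Lemma is_derive_add (f g : R -> R) (x df dg : R) :
  is_derive x 1 f df -> is_derive x 1 g dg ->
  is_derive x 1 (fun t => f t + g t) (df + dg).
Proof. by move=> hf hg; have := is_deriveD hf hg. Qed.

Lemma is_derive_uniq (f : R -> R) (x d1 d2 : R) :
  is_derive x 1 f d1 -> is_derive x 1 f d2 -> d1 = d2.
Proof. by move=> [_ <-] [_ <-]. Qed.

End S.

Section Gen.
Variables (R : realType) (Rad : R) (a h : nat -> R) (p : nat -> {poly R}).
Hypothesis hR : 1 < Rad.
Hypothesis ha : forall z : R, `|z| < Rad -> cvgn (series (fun k => a k * z ^+ k)).
Hypothesis hh : forall z : R, `|z| < Rad -> cvgn (series (fun k => h k * z ^+ k)).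
Hypothesis hp : forall x t : R, `|t| < Rad ->
     series (fun k => (p k).[x] * t ^+ k) @ \oo -->
       psval a t * expR (x * psval h t).
Variable y : R.

Let c k := (p k).[y].
Let A := psval a.
Let A1 := psval (pseries_diffs a).
Let A2 := psval (pseries_diffs (pseries_diffs a)).
Let H := psval h.
Let H1 := psval (pseries_diffs h).
Let H2 := psval (pseries_diffs (pseries_diffs h)).
Let E t := expR (y * H t).

Lemma hc : forall z : R, `|z| < Rad -> cvgn (pseries c z).
Proof. by move=> z hz; apply/cvg_ex; eexists; exact: hp. Qed.

Lemma Geq (z : R) : `|z| < Rad -> psval c z = A z * E z.
Proof. by move=> hz; apply: cvg_lim => //; exact: hp. Qed.

Let Fp t := A t * (E t * (y * H1 t)) + E t * A1 t.

Lemma F_deriv (t : R) : `|t| < Rad -> is_derive t 1 (fun t => A t * E t) (Fp t).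
Proof.
move=> ht.
have dA := psval_is_derive ha ht.
have dH := psval_is_derive hh ht.
exact: is_derive_mul dA (is_derive_expc (is_derive_scal y dH)).
Qed.

Lemma dc_eq (t : R) : `|t| < Rad -> psval (pseries_diffs c) t = Fp t.
Proof.
move=> ht.
apply: (is_derive_uniq (psval_is_derive hc ht)).
apply: (near_eq_is_derive _ (F_deriv ht)).
by near=> s; rewrite Geq //; near: s; exact: near_lt.
Unshelve. all: by end_near.
Qed.


Lemma ddc_eq1 : psval (pseries_diffs (pseries_diffs c)) 1 =
  (A 1 * (E 1 * (y * H2 1) + (y * H1 1) * (E 1 * (y * H1 1))) + (E 1 * (y * H1 1)) * A1 1)
  + (E 1 * A2 1 + A1 1 * (E 1 * (y * H1 1))).
Proof.
have h1 : `|1:R| < Rad by rewrite normr1.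
have dA := psval_is_derive ha h1.
have dH := psval_is_derive hh h1.
have dA1 := psval_is_derive (cvg_diffs ha) h1.
have dH1 := psval_is_derive (cvg_diffs hh) h1.
have dE : is_derive (1:R) (1:R) E (E 1 * (y * H1 1)) := is_derive_expc (is_derive_scal y dH).
have dF := is_derive_add (is_derive_mul dA (is_derive_mul dE (is_derive_scal y dH1)))
                         (is_derive_mul dE dA1).
apply: (is_derive_uniq (psval_is_derive (cvg_diffs hc) h1)).
apply: (near_eq_is_derive _ dF).
by near=> s; rewrite dc_eq //; near: s; exact: near_lt.
Unshelve. all: by end_near.
Qed.

Lemma S0_cvg : series c @ \oo --> A 1 * E 1.
Proof.
have h1 : `|1:R| < Rad by rewrite normr1.
have := @hp y 1 h1.
have -> : (fun k => (p k).[y] * 1 ^+ k) = c by apply/funext => k; rewrite expr1n mulr1.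
done.
Qed.

Lemma S1_cvg : series (fun k => k%:R * c k) @ \oo --> Fp 1.
Proof.
have h1 : `|1:R| < Rad by rewrite normr1.
have := pseries_diffs_equiv (cvg_diffs hc h1).
rewrite /= (_ : limn (pseries (pseries_diffs c) 1) = Fp 1); last exact: dc_eq h1.
have -> : (fun i => i%:R * c i * 1 ^+ i.-1) = (fun k => k%:R * c k).
  by apply/funext => k; rewrite expr1n mulr1.
done.
Qed.

Lemma S2_cvg : series (fun k => k%:R * (k%:R - 1) * c k) @ \oo -->
  psval (pseries_diffs (pseries_diffs c)) 1.
Proof.
have h1 : `|1:R| < Rad by rewrite normr1.
have := pseries_diffs_equiv (cvg_diffs (cvg_diffs hc) h1).
move=> hv.
suff : [sequence series (fun k => k%:R * (k%:R - 1) * c k) n.+1]_n @ \oo -->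
  psval (pseries_diffs (pseries_diffs c)) 1 by rewrite cvg_shiftS.
have -> : [sequence series (fun k => k%:R * (k%:R - 1) * c k) n.+1]_n =
  series (fun i => i%:R * pseries_diffs c i * 1 ^+ i.-1).
  apply/funext => n; rewrite /series /= big_nat_recl //= mul0r mul0r add0r.
  apply: eq_bigr => i _; rewrite expr1n mulr1 /pseries_diffs -natr1 addrK; ring.
exact: hv.
Qed.

End Gen.

Section Abs.
Variable R : realType.

Lemma lin3_cvg (u v w : R ^nat) (U V W al be ga : R) :
  series u @ \oo --> U -> series v @ \oo --> V -> series w @ \oo --> W ->
  series (fun k => al * u k + be * v k + ga * w k) @ \oo --> al * U + be * V + ga * W.
Proof.
move=> hu hv hw.
have -> : series (fun k => al * u k + be * v k + ga * w k) =
   (al *: series u + be *: series v) + ga *: series w.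
  apply/funext => n; rewrite /series /= !big_split /= -!mulr_sumr.
  done.
apply: cvgD; [apply: cvgD|]; exact: cvgZr.
Qed.


Lemma amgm (e l : R) : 0 < e -> l <= e / 2 + l ^+ 2 / (2 * e).
Proof.
move=> e0.
rewrite -subr_ge0.
have -> : e / 2 + l ^+ 2 / (2 * e) - l = (e - l) ^+ 2 / (2 * e).
  by field; rewrite gt_eqF.
by rewrite divr_ge0 // ?sqr_ge0 // mulr_ge0 // ltW.
Qed.

Lemma modulus_step (g : R -> R) (d r : R) : 0 < d ->
  (forall s t, 0 <= s -> 0 <= t -> `|s - t| <= d -> `|g s - g t| <= r) ->
  forall N : nat, forall s t, 0 <= t -> t <= s -> s - t <= N.+1%:R * d ->
    `|g s - g t| <= N.+1%:R * r.
Proof.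
move=> d0 hg.
have r0 : 0 <= r by apply: le_trans (hg 0 0 _ _ _) => //; rewrite subrr normr0 ltW.
elim=> [|N IH] s t t0 ts hst.
  rewrite mul1r; apply: hg => //; first exact: le_trans ts.
  by rewrite ger0_norm ?subr_ge0 // -(mul1r d).
have [hle|hlt] := leP (s - t) d.
  apply: le_trans (hg _ _ _ _ _) _ => //; first exact: le_trans ts.
    by rewrite ger0_norm ?subr_ge0.
  by rewrite ler_peMl // ler1n.
have h1 : t + d <= s by lra.
have h2 : 0 <= t + d by rewrite addr_ge0 // ltW.
have h3 : s - (t + d) <= N.+1%:R * d.
  by move: hst; rewrite -(@natr1 R N.+1) mulrDl mul1r; lra.
have := IH s (t + d) h2 h1 h3.
have := hg (t + d) t h2 t0.
have hd : `|t + d - t| <= d by rewrite addrAC subrr add0r ger0_norm // ltW.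
move=> /(_ hd) h4 h5.
have := ler_normD (g s - g (t + d)) (g (t + d) - g t).
rewrite addrA subrK => h6.
rewrite -(@natr1 R N.+1) mulrDl mul1r.
exact: le_trans h6 (lerD h5 h4).
Qed.

Lemma modulus_ext (g : R -> R) (d r : R) : 0 < d ->
  (forall s t, 0 <= s -> 0 <= t -> `|s - t| <= d -> `|g s - g t| <= r) ->
  forall s t, 0 <= s -> 0 <= t -> `|g s - g t| <= (1 + `|s - t| / d) * r.
Proof.
move=> d0 hg.
have r0 : 0 <= r by apply: le_trans (hg 0 0 _ _ _) => //; rewrite subrr normr0 ltW.
suff H : forall s t, 0 <= t -> t <= s -> `|g s - g t| <= (1 + `|s - t| / d) * r.
  move=> s t s0 t0; have [ts|st] := leP t s; first exact: H.
  by rewrite distrC [`|s - t|]distrC; apply: H => //; exact: ltW.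
move=> s t t0 ts.
have q0 : 0 <= (s - t) / d by rewrite divr_ge0 ?subr_ge0 // ltW.
have [hN1 hN2] := andP (Num.Theory.truncn_itv q0).
have hst : s - t <= (Num.truncn ((s - t) / d)).+1%:R * d.
  by rewrite -ler_pdivrMr //; apply: ltW.
apply: le_trans (modulus_step d0 hg t0 ts hst) _.
rewrite ler_wpM2r // ger0_norm ?subr_ge0 // -natr1 addrC lerD2l.
exact: hN1.
Qed.


Lemma op_bound (c : R ^nat) (g : R -> R) (q x d r M0 M1 M2 e : R) :
  (forall k, 0 <= c k) -> 0 <= x -> 0 < d -> 0 < e -> 0 <= q ->
  (forall s t, 0 <= s -> 0 <= t -> `|g s - g t| <= (1 + `|s - t| / d) * r) ->
  series c @ \oo --> M0 ->
  series (fun k => k%:R * c k) @ \oo --> M1 ->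
  series (fun k => k%:R * (k%:R - 1) * c k) @ \oo --> M2 ->
  series (fun k => c k * g (k%:R * q)) @ \oo -->
    (limn (series (fun k => c k * g (k%:R * q)))) /\
  `|limn (series (fun k => c k * g (k%:R * q))) - M0 * g x| <=
    (r * (1 + e / 2 + x ^+ 2 / (2 * e * d ^+ 2))) * M0
    + (r * ((q ^+ 2 - 2 * x * q) / (2 * e * d ^+ 2))) * M1
    + (r * (q ^+ 2 / (2 * e * d ^+ 2))) * M2.
Proof.
move=> c0 x0 d0 e0 q0 hg hS0 hS1 hS2.
set al := r * (1 + e / 2 + x ^+ 2 / (2 * e * d ^+ 2)).
set be := r * ((q ^+ 2 - 2 * x * q) / (2 * e * d ^+ 2)).
set ga := r * (q ^+ 2 / (2 * e * d ^+ 2)).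
pose u := fun k => c k * (g (k%:R * q) - g x).
pose w := fun k => al * c k + be * (k%:R * c k) + ga * (k%:R * (k%:R - 1) * c k).
have hw : series w @ \oo --> al * M0 + be * M1 + ga * M2 := lin3_cvg (al:=al) (be:=be) (ga:=ga) hS0 hS1 hS2.
have r0 : 0 <= r.
  have := hg 0 0 (lexx _) (lexx _); rewrite !subrr !normr0 mul0r addr0 mul1r.
  by apply: le_trans.
have hb : forall k, `|u k| <= w k.
  move=> k.
  have -> : w k = c k * ((1 + e / 2 + (k%:R * q - x) ^+ 2 / (2 * e * d ^+ 2)) * r).
    rewrite /w /al /be /ga; field.
    by rewrite !gt_eqF.
  rewrite /u normrM (ger0_norm (c0 k)) ler_wpM2l //.
  apply: le_trans (hg _ _ _ x0) _; first by rewrite mulr_ge0.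
  rewrite ler_wpM2r // -addrA lerD2l.
  have := amgm (`|k%:R * q - x| / d) e0.
  have -> : (`|k%:R * q - x| / d) ^+ 2 / (2 * e) = (k%:R * q - x) ^+ 2 / (2 * e * d ^+ 2).
    rewrite expr_div_n real_normK ?num_real //; field.
    by rewrite !gt_eqF.
  done.
have cu : cvgn (series (fun k => `|u k|)).
  apply: (@series_le_cvg _ (fun k => `|u k|) w).
  - by move=> k; apply: normr_ge0.
  - by move=> k; apply: le_trans (hb k).
  - exact: hb.
  - by apply/cvg_ex; eexists; exact: hw.
have cu' : cvgn (series u) by apply: normed_cvg.
have hlu : `|limn (series u)| <= al * M0 + be * M1 + ga * M2.
  apply: le_trans (lim_series_norm cu) _.
  rewrite -(cvg_lim _ hw) //.
  apply: lim_series_le => //; first by apply/cvg_ex; eexists; exact: hw.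
have eq0 : forall n, series (fun k => c k * g (k%:R * q)) n = series u n + g x * series c n.
  move=> n; rewrite /series /= mulr_sumr -big_split /=.
  by apply: eq_bigr => i _; rewrite /u; ring.
have eq1 : series (fun k => c k * g (k%:R * q)) = series u + g x *: series c.
  by apply/funext => n; rewrite eq0.
have hc : series (fun k => c k * g (k%:R * q)) @ \oo --> limn (series u) + g x * M0.
  by rewrite eq1; apply: cvgD => //; apply: cvgZr.
rewrite (cvg_lim _ hc) //; split => //.
by rewrite [M0 * _]mulrC addrK.
Qed.

End Abs.

Section Abs2.
Variable R : realType.

Lemma series_lim_ge0 (c : R ^nat) (M : R) :
  (forall k, 0 <= c k) -> series c @ \oo --> M -> 0 <= M.
Proof.
move=> c0 hc; rewrite -(cvg_lim _ hc) //.
apply: limr_ge; first by apply/cvg_ex; eexists; exact: hc.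
by near=> n; apply: sumr_ge0 => i _; exact: c0.
Unshelve. all: by end_near.
Qed.

Lemma var_nonneg (c : R ^nat) (M0 M1 M2 m : R) :
  (forall k, 0 <= c k) ->
  series c @ \oo --> M0 ->
  series (fun k => k%:R * c k) @ \oo --> M1 ->
  series (fun k => k%:R * (k%:R - 1) * c k) @ \oo --> M2 ->
  0 <= m ^+ 2 * M0 + (1 - 2 * m) * M1 + 1 * M2.
Proof.
move=> c0 h0 h1 h2.
apply: (series_lim_ge0 _ (lin3_cvg (al := m ^+ 2) (be := 1 - 2 * m) (ga := 1) h0 h1 h2)).
move=> k.
have -> : m ^+ 2 * c k + (1 - 2 * m) * (k%:R * c k) + 1 * (k%:R * (k%:R - 1) * c k)
   = c k * (k%:R - m) ^+ 2 by ring.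
by rewrite mulr_ge0 // sqr_ge0.
Qed.

Lemma slope_nonneg (C D : R) : (forall y, 0 <= y -> 0 <= C + y * D) -> 0 <= D.
Proof.
move=> H; rewrite leNgt; apply/negP => hD.
have hy : 0 <= (`|C| + 1) / (- D) by rewrite divr_ge0 // ?addr_ge0 // oppr_ge0 ltW.
have := H _ hy.
have -> : C + (`|C| + 1) / - D * D = C - `|C| - 1.
  by field; rewrite lt_eqF.
have := ler_norm C; lra.
Qed.

Lemma final_real (Z r K X : R) : 0 <= r -> 0 <= K -> K <= X ->
  (forall e, 0 < e -> Z <= r * (1 + e / 2 + K / (2 * e))) ->
  Z <= (1 + Num.sqrt X) * r.
Proof.
move=> r0 K0 KX H.
have X0 : 0 <= X := le_trans K0 KX.
set s := Num.sqrt X.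
have s0 : 0 <= s := sqrtr_ge0 X.
have sX : s ^+ 2 = X by rewrite sqr_sqrtr.
apply/ler_addgt0Pr => t t0.
pose u := 2 * t / (r + 1).
have u0 : 0 < u by rewrite divr_gt0 // ?mulr_gt0 // ltr_pwDr.
have e0 : 0 < s + u by rewrite ltr_pwDr.
apply: le_trans (H _ e0) _.
have h1 : K / (2 * (s + u)) <= s / 2.
  rewrite ler_pdivrMr ?mulr_gt0 //.
  apply: le_trans KX _; rewrite -sX.
  have : s * s <= s * (s + u) by rewrite ler_wpM2l // lerDl ltW.
  move=> hh; rewrite expr2; lra.
have h2 : r * (1 + (s + u) / 2 + K / (2 * (s + u))) <= r * (1 + (s + u) / 2 + s / 2).
  by rewrite ler_wpM2l // lerD2l.
apply: le_trans h2 _.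
have h3 : r * u / 2 <= t.
  have r1 : 0 < r + 1 by rewrite ltr_pwDr.
  have -> : r * u / 2 = t * r / (r + 1) by rewrite /u; field; rewrite gt_eqF.
  rewrite ler_pdivrMr //; nra.
have -> : r * (1 + (s + u) / 2 + s / 2) = (1 + s) * r + r * u / 2 by field.
by rewrite lerD2l.
Qed.


End Abs2.

Lemma moments (R : realType) (Rad : R) (a h : nat -> R) (p : nat -> {poly R}) :
  1 < Rad ->
  (forall z : R, `|z| < Rad -> cvgn (series (fun k => a k * z ^+ k))) ->
  (forall z : R, `|z| < Rad -> cvgn (series (fun k => h k * z ^+ k))) ->
  (forall x t : R, `|t| < Rad ->
     series (fun k => (p k).[x] * t ^+ k) @ \oo -->
       psval a t * expR (x * psval h t)) ->
  forall y : R,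
  series (fun k => (p k).[y]) @ \oo --> psval a 1 * expR (y * psval h 1) /\
  series (fun k => k%:R * (p k).[y]) @ \oo -->
     psval a 1 * (expR (y * psval h 1) * (y * psval (pseries_diffs h) 1))
     + expR (y * psval h 1) * psval (pseries_diffs a) 1 /\
  series (fun k => k%:R * (k%:R - 1) * (p k).[y]) @ \oo -->
    (psval a 1 * (expR (y * psval h 1) * (y * psval (pseries_diffs (pseries_diffs h)) 1)
       + (y * psval (pseries_diffs h) 1) * (expR (y * psval h 1) * (y * psval (pseries_diffs h) 1)))
     + (expR (y * psval h 1) * (y * psval (pseries_diffs h) 1)) * psval (pseries_diffs a) 1)
    + (expR (y * psval h 1) * psval (pseries_diffs (pseries_diffs a)) 1
       + psval (pseries_diffs a) 1 * (expR (y * psval h 1) * (y * psval (pseries_diffs h) 1))).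
Proof.
move=> hR ha hh hp y.
split; first exact: (S0_cvg (y := y) hR hp).
split; first exact: (S1_cvg (y := y) hR ha hh hp).
have := S2_cvg (y := y) hR hp.
by rewrite (ddc_eq1 hR ha hh hp y).
Qed.

Unset Implicit Arguments.
Theorem theorem2p6 (R : realType) (Rad : R) (a h : nat -> R)
  (p : nat -> {poly R}) (b : nat -> R) (f : R -> R) (aa : R) :
  1 < Rad ->
  (forall z : R, `|z| < Rad -> cvgn (series (fun k => a k * z ^+ k))) ->
  (forall z : R, `|z| < Rad -> cvgn (series (fun k => h k * z ^+ k))) ->
  a 0%N != 0 -> h 0%N = 0 -> h 1%N != 0 ->
  (forall x t : R, `|t| < Rad ->
     series (fun k => (p k).[x] * t ^+ k) @ \oo -->
       psval a t * expR (x * psval h t)) ->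
  (forall (k : nat) (x : R), 0 <= x -> 0 <= (p k).[x]) ->
  psval a 1 != 0 ->
  derive1 (psval h) 1 = 1 ->
  (forall n, 0 < b n) ->
  {homo b : m n / (m <= n)%N >-> m <= n} ->
  b @ \oo --> +oo ->
  (fun n => b n / n%:R) @ \oo --> 0 ->
  0 < aa ->
  C_E f ->
  forall (n : nat) (x : R), (0 < n)%N -> 0 <= x <= aa ->
  ((`|Tstar a h p b n f x - f x|)%:E <=
    (1 + Num.sqrt ((1 + derive1n 2 (psval h) 1) * aa
         + b n / n%:R * ((derive1 (psval a) 1 + derive1n 2 (psval a) 1) / psval a 1)))%:E
    * modcont f (Num.sqrt (b n / n%:R)))%E.
Proof.
move=> hR ha hh a0 h0 h1 hp hpos hA hH1 hb bmono binf bn0 aa0 hf n x n0 /andP[x0 xa].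
have h1R : `|1:R| < Rad by rewrite normr1.
have eA1 := psval_derive1 ha h1R.
have eA2 := psval_derive2 hR ha.
have eH2 := psval_derive2 hR hh.
have eH1 : psval (pseries_diffs h) 1 = 1 by rewrite -(psval_derive1 hh h1R).
rewrite eA1 eA2 eH2.
have Hmom := moments hR ha hh hp.
set A := psval a 1 in hA Hmom *.
set A1 := psval (pseries_diffs a) 1 in Hmom *.
set A2 := psval (pseries_diffs (pseries_diffs a)) 1 in Hmom *.
set H2 := psval (pseries_diffs (pseries_diffs h)) 1 in Hmom *.
rewrite eH1 in Hmom.
have Apos : 0 < A.
  have [m0 _] := Hmom 0.
  have := series_lim_ge0 (fun k => hpos k 0 (lexx 0)) m0.
  rewrite pmulr_lge0 ?expR_gt0 // => A0.
  by rewrite lt_neqAle eq_sym hA.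
have hD : 0 <= A * (1 + H2).
  apply: (@slope_nonneg _ (A2 + A1 - A1 ^+ 2 / A)) => y' y'0.
  have [m0 [m1 m2]] := Hmom y'.
  have := var_nonneg (y' + A1 / A) (fun k => hpos k y' y'0) m0 m1 m2.
  set E := expR (y' * psval h 1).
  have E0 : 0 < E by rewrite expR_gt0.
  have -> : (y' + A1 / A) ^+ 2 * (A * E) + (1 - 2 * (y' + A1 / A)) * (A * (E * (y' * 1)) + E * A1) +
    1 * (A * (E * (y' * H2) + y' * 1 * (E * (y' * 1))) + E * (y' * 1) * A1 + (E * A2 + A1 * (E * (y' * 1))))
    = E * (A2 + A1 - A1 ^+ 2 / A + y' * (A * (1 + H2))).
    by field; rewrite gt_eqF.
  by rewrite pmulr_rge0.
have H2pos : 0 <= 1 + H2 by rewrite -(pmulr_rge0 _ Apos).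
have nn0 : 0 < n%:R :> R by rewrite ltr0n.
set q := b n / n%:R.
have q0 : 0 < q by rewrite divr_gt0.
set d := Num.sqrt q.
have d0 : 0 < d by rewrite sqrtr_gt0.
have dq : d ^+ 2 = q by rewrite sqr_sqrtr // ltW.
have coef0 : 0 < 1 + Num.sqrt ((1 + H2) * aa + q * ((A1 + A2) / A)).
  by rewrite ltr_pwDl // sqrtr_ge0.
case hw : (modcont f d) => [r| |]; last first.
- exfalso.
  have : ((`|f 0 - f 0|)%:E <= modcont f d)%E.
    by apply: ereal_sup_ubound; exists 0, 0; split => //; rewrite subrr normr0 ltW.
  by rewrite hw leeNy_eq.
- by rewrite gt0_muley ?lte_fin // leey.
have hg : forall s t, 0 <= s -> 0 <= t -> `|s - t| <= d -> `|f s - f t| <= r.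
  move=> s t s0 t0 st; rewrite -lee_fin -hw.
  by apply: ereal_sup_ubound; exists s, t.
have r0 : 0 <= r.
  by have := hg 0 0 (lexx _) (lexx _); rewrite subrr normr0 => /(_ (ltW d0)); apply: le_trans.
have hg' := modulus_ext d0 hg.
rewrite -EFinM lee_fin.
rewrite /Tstar -/A.
have bn0' : b n != 0 by rewrite gt_eqF.
have nn0' : n%:R != 0 :> R by rewrite gt_eqF.
set y := n%:R / b n * x.
have y0 : 0 <= y by rewrite mulr_ge0 // divr_ge0 // ltW.
have hxy : x = q * y.
  by rewrite /q /y; field; rewrite bn0' nn0'.
have [m0 [m1 m2]] := Hmom y.
set E := expR (y * psval h 1) in m0 m1 m2 *.
have E0 : 0 < E by rewrite expR_gt0.
have ef : (fun k => (p k).[y] * f (k%:R / n%:R * b n)) = (fun k => (p k).[y] * f (k%:R * q)).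
  by apply/funext => k; rewrite /q mulrAC -mulrA.
rewrite ef expRN -/E.
set K := q * ((A1 + A2) / A) + x * (1 + H2).
apply: (@final_real _ _ _ K) => //.
- have := var_nonneg y (fun k => hpos k y y0) m0 m1 m2.
  have -> : K = q * (y ^+ 2 * (A * E) + (1 - 2 * y) * (A * (E * (y * 1)) + E * A1) +
     1 * (A * (E * (y * H2) + y * 1 * (E * (y * 1))) + E * (y * 1) * A1 + (E * A2 + A1 * (E * (y * 1)))))
     / (A * E).
    rewrite /K hxy; field.
    by rewrite !gt_eqF.
  move=> hV; apply: divr_ge0; first exact: mulr_ge0 (ltW q0) hV.
  by rewrite mulr_ge0 // ltW.
- rewrite /K addrC lerD2r [_ * aa]mulrC ler_wpM2r //.
- move=> e e0.
  have [_ hb'] := op_bound (q := q) (x := x) (e := e) (fun k => hpos k y y0) x0 d0 e0 (ltW q0) hg' m0 m1 m2.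
  set L := limn _ in hb' *.
  have -> : E^-1 / A * L - f x = (L - A * E * f x) * (A * E)^-1.
    by field; rewrite !gt_eqF.
  rewrite normrM (ger0_norm (x := (A * E)^-1)); last by rewrite invr_ge0 mulr_ge0 // ltW.
  apply: le_trans (ler_wpM2r _ hb') _; first by rewrite invr_ge0 mulr_ge0 // ltW.
  rewrite le_eqVlt; apply/orP; left; apply/eqP; rewrite dq /K hxy; field.
  by rewrite !gt_eqF.
Qed.
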